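(* Let $0<t<1$ and $\alpha>0$. Define $H^{t}:\mathbb{R}\to\mathbb{R}$ by $H^{t}(p)=0$ if $p=0$, $H^{t}(p)=t$ if $0<|p|\le 1$, and $H^{t}(p)=1$ if $|p|>1$. Let $x\in\mathbb{R}$ with $|x|\ge 1$, and consider $E(p)=(x-p)^{2}+\alpha H^{t}(p)$ for $p\in\mathbb{R}$. Then a global minimizer of $E$ over $p\in\mathbb{R}$ is given as follows. (i) If $\alpha>\frac{2-t+2\sqrt{1-t}}{t^{2}}$: $p=0$ if $|x|\le\sqrt{\alpha}$, and $p=x$ if $|x|>\sqrt{\alpha}$. (ii) If $\frac{2-t+2\sqrt{1-t}}{t^{2}}\ge\alpha\ge\frac{2-t-2\sqrt{1-t}}{t^{2}}$: $p=0$ if $|x|\le\frac{1+\alpha t}{2}$; $p=\operatorname{sgn}(x)$ if $\frac{1+\alpha t}{2}<|x|\le 1+\sqrt{\alpha(1-t)}$; and $p=x$ if $|x|>1+\sqrt{\alpha(1-t)}$. (iii) If $\frac{2-t-2\sqrt{1-t}}{t^{2}}>\alpha>0$: $p=\operatorname{sgn}(x)$ if $1\le|x|\le 1+\sqrt{\alpha(1-t)}$, and $p=x$ if $|x|>1+\sqrt{\alpha(1-t)}$.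
   Context: $\operatorname{sgn}(x)$ denotes the sign of $x$ ($1$ if $x>0$, $-1$ if $x<0$). The function $H^{t}$ is the per-entry penalty of the ''$l_0^t$ measure'', which counts entries of absolute value greater than $1$ with weight $1$ and nonzero entries of absolute value at most $1$ with weight $t$. *)

(* Defs.v *)
From Stdlib Require Import Reals Lra.
Open Scope R_scope.

Definition sgn (x : R) : R :=
  if Rlt_dec 0 x then 1 else if Rlt_dec x 0 then -1 else 0.

Definition Ht (t p : R) : R :=
  if Req_EM_T p 0 then 0 else if Rle_dec (Rabs p) 1 then t else 1.

Definition Efun (t alpha x p : R) : R := (x - p)^2 + alpha * Ht t p.

Definition is_global_min (f : R -> R) (p : R) : Prop :=
  forall q : R, f p <= f q.

(* Main.v *)
Require Import Defs.
From Stdlib Require Import Reals Lra Psatz.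
Open Scope R_scope.

Lemma lowb t alpha x p : 0<t -> 0<alpha -> 1 <= Rabs x ->
  Efun t alpha x p <= Rabs x ^2 ->
  Efun t alpha x p <= (Rabs x - 1)^2 + alpha*t ->
  Efun t alpha x p <= alpha -> is_global_min (Efun t alpha x) p.
Proof.
  intros ht ha hx h1 h2 h3 q. unfold Efun at 2, Ht.
  destruct (Req_EM_T q 0).
  - subst. replace (x-0) with x by ring. rewrite <- (pow2_abs x). lra.
  - destruct (Rle_dec (Rabs q) 1).
    + pose proof (Rabs_triang_inv x q). rewrite <- (pow2_abs (x-q)).
      assert (Rabs (x-q) >= Rabs x - 1) by lra.
      assert ((Rabs x - 1)^2 <= Rabs (x-q)^2) by nra. lra.
    + pose proof (pow2_ge_0 (x-q)). lra.
Qed.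

Lemma E0 t alpha x : Efun t alpha x 0 = Rabs x ^2.
Proof. unfold Efun, Ht. destruct (Req_EM_T 0 0); [|congruence].
  replace (x-0) with x by ring. rewrite <- (pow2_abs x). ring. Qed.

Lemma Es t alpha x : 1 <= Rabs x -> Efun t alpha x (sgn x) = (Rabs x - 1)^2 + alpha*t.
Proof. intros hx. unfold Efun, Ht, sgn.
  destruct (Rlt_dec 0 x).
  - rewrite (Rabs_pos_eq x) by lra. destruct (Req_EM_T 1 0); [lra|].
    rewrite Rabs_R1. destruct (Rle_dec 1 1); [ring|lra].
  - destruct (Rlt_dec x 0); [|rewrite Rabs_pos_eq in hx; lra].
    rewrite (Rabs_left x) by lra. destruct (Req_EM_T (-1) 0); [lra|].
    replace (Rabs (-1)) with 1 by (rewrite Rabs_left by lra; ring). destruct (Rle_dec 1 1); [ring|lra].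
Qed.

Lemma Ex t alpha x : 1 < Rabs x -> Efun t alpha x x = alpha.
Proof. intros hx. unfold Efun, Ht.
  destruct (Req_EM_T x 0). { subst. rewrite Rabs_R0 in hx; lra. }
  destruct (Rle_dec (Rabs x) 1); [lra|]. ring. Qed.

Theorem theorem3p2 (t alpha x : R) (ht0 : 0 < t) (ht1 : t < 1)
  (halpha : 0 < alpha) (hx : 1 <= Rabs x) :
  let E := Efun t alpha x in
  let up := (2 - t + 2 * sqrt (1 - t)) / t^2 in
  let lo := (2 - t - 2 * sqrt (1 - t)) / t^2 in
  (alpha > up ->
     (Rabs x <= sqrt alpha -> is_global_min E 0) /\
     (Rabs x > sqrt alpha -> is_global_min E x)) /\
  (up >= alpha -> alpha >= lo ->
     (Rabs x <= (1 + alpha * t) / 2 -> is_global_min E 0) /\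
     ((1 + alpha * t) / 2 < Rabs x -> Rabs x <= 1 + sqrt (alpha * (1 - t)) ->
        is_global_min E (sgn x)) /\
     (Rabs x > 1 + sqrt (alpha * (1 - t)) -> is_global_min E x)) /\
  (lo > alpha ->
     (1 <= Rabs x -> Rabs x <= 1 + sqrt (alpha * (1 - t)) ->
        is_global_min E (sgn x)) /\
     (Rabs x > 1 + sqrt (alpha * (1 - t)) -> is_global_min E x)).
Proof.
  intros E up lo.
  pose proof (sqrt_sqrt alpha ltac:(lra)) as Hs.
  pose proof (sqrt_lt_R0 alpha halpha) as Hs0.
  pose proof (sqrt_sqrt (1-t) ltac:(lra)) as Hr.
  pose proof (sqrt_lt_R0 (1-t) ltac:(lra)) as Hr0.
  rewrite sqrt_mult by lra.
  set (s := sqrt alpha) in *. set (r := sqrt (1-t)) in *.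
  assert (Hr1 : r < 1) by nra.
  assert (Ht : t = (1-r)*(1+r)) by nra.
  assert (Ha : alpha = s*s) by lra.
  set (a := Rabs x) in *.
  assert (Ht2 : 0 < t^2) by nra.
  assert (Hup : up = (1+r)^2 / t^2) by (unfold up; f_equal; nra).
  assert (Hlo : lo = (1-r)^2 / t^2) by (unfold lo; f_equal; nra).
  assert (Hu0 : 0 < s*(1-r)) by nra.
  assert (Hv0 : 0 < s*(1+r)) by nra.
  assert (Hkey : alpha * t^2 = (s*(1-r))^2 * (1+r)^2) by (rewrite Ha, Ht; ring).
  assert (Hsr : alpha - alpha*t = (s*r)*(s*r)) by (rewrite Ha; nra).
  unfold E. split; [|split].
  - intros Hgt. assert (H1 : s*(1-r) > 1).
    { rewrite Hup in Hgt. apply Rlt_gt, (Rmult_lt_compat_r (t^2)) in Hgt; [|lra].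
      unfold Rdiv in Hgt. rewrite Rmult_assoc, Rinv_l, Rmult_1_r in Hgt by lra.
      rewrite Hkey in Hgt. set (u := s*(1-r)) in *.
      assert (u^2 > 1).
      { apply (Rmult_lt_reg_r ((1+r)^2)); nra. }
      nra. }
    assert (Hq : s*s*t - 2*s + 1 > 0).
    { rewrite Ht. assert (s*(1+r) > 1) by nra.
      assert ((s*(1-r)-1)*(s*(1+r)-1) > 0) by (apply Rmult_lt_0_compat; lra). nra. }
    split; intros Hax.
    + apply lowb; fold a; try lra; rewrite E0; fold a; nra.
    + assert (s > 1) by nra. assert (a > 1) by lra.
      assert (a - 1 > s*r) by nra.
      apply lowb; fold a; try lra; rewrite Ex by (fold a; lra); fold a; try nra.
  - intros Hg Hl.
    assert (H1 : s*(1-r) <= 1).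
    { rewrite Hup in Hg. apply Rge_le, (Rmult_le_compat_r (t^2)) in Hg; [|lra].
      unfold Rdiv in Hg. rewrite Rmult_assoc, Rinv_l, Rmult_1_r in Hg by lra.
      rewrite Hkey in Hg. set (u := s*(1-r)) in *.
      assert (u^2 <= 1).
      { apply (Rmult_le_reg_r ((1+r)^2)); nra. }
      nra. }
    assert (H2 : s*(1+r) >= 1).
    { rewrite Hlo in Hl. apply Rge_le, (Rmult_le_compat_r (t^2)) in Hl; [|lra].
      unfold Rdiv in Hl. rewrite Rmult_assoc, Rinv_l, Rmult_1_r in Hl by lra.
      assert (alpha * t^2 = (s*(1+r))^2 * (1-r)^2) as Hk2 by (rewrite Ha, Ht; ring).
      rewrite Hk2 in *. set (u := s*(1+r)) in *.
      assert (u^2 >= 1) by (apply Rle_ge, (Rmult_le_reg_r ((1-r)^2)); nra). nra. }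
    assert (Hq : s*s*t - 2*s + 1 <= 0) by (rewrite Ht; nra).
    split; [|split].
    + intros Hax. assert (alpha*t = s*s*t) by (rewrite Ha; ring). assert (a <= s) by lra.
      apply lowb; fold a; try lra; rewrite E0; fold a; nra.
    + intros Hax1 Hax2. assert (0 <= a - 1 <= s*r) by lra.
      assert ((a-1)^2 <= (s*r)*(s*r)) by nra.
      apply lowb; fold a; try lra; rewrite Es by (fold a; lra); fold a; nra.
    + intros Hax. assert (a - 1 > s*r) by lra. assert (s*r >= 0) by nra.
      assert (a > s) by nra.
      apply lowb; fold a; try lra; rewrite Ex by (fold a; lra); fold a; nra.
  - intros Hl.
    assert (H2 : s*(1+r) < 1).
    { rewrite Hlo in Hl. apply Rgt_lt, (Rmult_lt_compat_r (t^2)) in Hl; [|lra].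
      unfold Rdiv in Hl. rewrite Rmult_assoc, Rinv_l, Rmult_1_r in Hl by lra.
      assert (alpha * t^2 = (s*(1+r))^2 * (1-r)^2) as Hk2 by (rewrite Ha, Ht; ring).
      rewrite Hk2 in *. set (u := s*(1+r)) in *.
      assert (u^2 < 1) by (apply (Rmult_lt_reg_r ((1-r)^2)); nra). nra. }
    assert (s < 1) by nra.
    split.
    + intros _ Hax. assert (0 <= a - 1 <= s*r) by lra.
      assert ((a-1)^2 <= (s*r)*(s*r)) by nra. assert (s*s*t < 1) by nra.
      apply lowb; fold a; try lra; rewrite Es by (fold a; lra); fold a; nra.
    + intros Hax. assert (a - 1 > s*r) by lra. assert (s*r >= 0) by nra.
      apply lowb; fold a; try lra; rewrite Ex by (fold a; nra); fold a; nra.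
Qed.
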